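(* Let $G=(V,E)$ be a directed graph with edge weights $wt$ and no cycle of negative or zero weight, let $x_1,y_1,x_2,y_2\in V$, and let $e=(a,v)\in E$ with $\mathrm{dist}(x_i,y_i)=\mathrm{dist}(x_i,a)+wt(a,v)+\mathrm{dist}(v,y_i)$ for $i=1,2$. Then $$H_{av}(x_1,y_1,x_2,y_2)=F(x_2,a)\cdot z_{av}^2\cdot F_{\mathrm{disj}}(x_1,a,v,y_2)\cdot F(v,y_1).$$
   Context: Introduce an indeterminate $z_e$ (also written $z_{uv}$ for $e=(u,v)$) for each edge; polynomials have coefficients in a field of characteristic two. For a simple path $P$ with edges $e_1,\dots,e_\ell$, $f(P)=\prod_i z_{e_i}$ ($1$ for a single-vertex path). $\Pi(x,y)$ is the set of shortest paths from $x$ to $y$ and $F(x,y)=\sum_{P\in\Pi(x,y)}f(P)$. Paths from $x_1$ to $y_1$ and from $x_2$ to $y_2$ are internally vertex-disjoint if they share no vertex outside $\{x_1,y_1\}\cap\{x_2,y_2\}$; $F_{\mathrm{disj}}(x_1,y_1,x_2,y_2)=\sum f(P_1)f(P_2)$ over internally vertex-disjoint pairs $(P_1,P_2)\in\Pi(x_1,y_1)\times\Pi(x_2,y_2)$. For a path $P$ containing edge $e=(a,v)$ and vertices $x$ before $e$ and $y$ after $e$: $P[x,e]$ denotes the subpath $P[x,a]$ and $P[e,y]$ the subpath $P[v,y]$. $H_{av}(x_1,y_1,x_2,y_2)=\sum f(P_1)f(P_2)$ over pairs $(P_1,P_2)\in\Pi(x_1,y_1)\times\Pi(x_2,y_2)$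 with $e\in E(P_1)\cap E(P_2)$ and $P_1[x_1,e]$, $P_2[e,y_2]$ internally vertex-disjoint. *)

(* Defs.v *)
From HB Require Import structures.
From mathcomp Require Import all_boot all_order all_algebra.
From mathcomp Require Import mpoly.
Set Implicit Arguments. Unset Strict Implicit. Unset Printing Implicit Defensive.
Import Order.TTheory GRing.Theory Num.Theory.
Local Open Scope ring_scope.

Section Paths.
Variables (V : finType) (E : rel V).

Definition pedges (s : seq V) : seq (V * V) := zip s (behead s).

Fixpoint all_seqs (n : nat) : seq (seq V) :=
  if n is n'.+1 then [seq x :: s | x <- enum V, s <- all_seqs n'] else [:: [::]].

Definition is_spath (x y : V) (s : seq V) : bool :=
  match s with
  | [::] => false
  | u :: t => [&& u == x, path E u t, last u t == y & uniq s]
  end.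

(* all simple paths from x to y (a simple path has at most #|V| vertices) *)
Definition spaths (x y : V) : seq (seq V) :=
  [seq s <- flatten [seq all_seqs n | n <- iota 0 #|V|.+1] | is_spath x y s].

Variables (W : realDomainType) (wt : V -> V -> W).

Definition pweight (s : seq V) : W := \sum_(e <- pedges s) wt e.1 e.2.

Definition shortest (x y : V) : seq (seq V) :=
  [seq p <- spaths x y | all (fun q => pweight p <= pweight q) (spaths x y)].

(* dist(x,y); None encodes +infinity (y unreachable from x) *)
Definition dist (x y : V) : option W :=
  if shortest x y is p :: _ then Some (pweight p) else None.

Definition oadd (a b : option W) : option W :=
  match a, b with Some a, Some b => Some (a + b) | _, _ => None end.

Definition no_nonpos_cycle : Prop :=
  forall (x : V) (p : seq V), path E x p -> last x p = x -> p != [::] ->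
    uniq p -> 0 < pweight (x :: p).

Variables (R : comRingType) (z : V -> V -> R).

Definition fpath (s : seq V) : R := \prod_(e <- pedges s) z e.1 e.2.

Definition F (x y : V) : R := \sum_(p <- shortest x y) fpath p.

Definition int_disj (x1 y1 x2 y2 : V) (P1 P2 : seq V) : bool :=
  all (fun u => (u \in P2) ==> ((u \in [:: x1; y1]) && (u \in [:: x2; y2]))) P1.

Definition Fdisj (x1 y1 x2 y2 : V) : R :=
  \sum_(P1 <- shortest x1 y1) \sum_(P2 <- shortest x2 y2 | int_disj x1 y1 x2 y2 P1 P2)
     fpath P1 * fpath P2.

Definition prefix_to (a : V) (s : seq V) : seq V := take (index a s).+1 s.
Definition suffix_from (v : V) (s : seq V) : seq V := drop (index v s) s.

Definition Hav (a v x1 y1 x2 y2 : V) : R :=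
  \sum_(P1 <- shortest x1 y1) \sum_(P2 <- shortest x2 y2 |
      [&& (a, v) \in pedges P1, (a, v) \in pedges P2 &
          int_disj x1 a v y2 (prefix_to a P1) (suffix_from v P2)])
     fpath P1 * fpath P2.

End Paths.

(* The indeterminate z_{uw}: one variable of the polynomial ring for each
   ordered pair (u,w) of vertices (only those with E u w are ever used). *)
Definition zvar (K : fieldType) (V : finType) (u w : V) : {mpoly K[#|{: V * V}|]} :=
  'X_(enum_rank (u, w)).

(* Main.v *)
Require Import Defs.
From HB Require Import structures.
From mathcomp Require Import all_boot all_order all_algebra.
From mathcomp Require Import mpoly.
From mathcomp Require Import ring lra zify.
Set Implicit Arguments. Unset Strict Implicit. Unset Printing Implicit Defensive.
Import Order.TTheory GRing.Theory Num.Theory.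
Local Open Scope ring_scope.

Section Proof.
Variables (V : finType) (E : rel V) (W : realDomainType) (wt : V -> V -> W).

Lemma pedges_cat_mid (s : seq V) w t :
  pedges (s ++ w :: t) = pedges (rcons s w) ++ pedges (w :: t).
Proof.
elim: s => [//|y s IH]. case: s IH => [//|u s] IH.
by rewrite /pedges /= in IH *; rewrite IH.
Qed.

Lemma pedges_join (s : seq V) a v t :
  pedges (s ++ a :: v :: t) = pedges (rcons s a) ++ (a, v) :: pedges (v :: t).
Proof. by rewrite pedges_cat_mid. Qed.

Local Notation pw := (pweight wt).

Lemma pw_mid (s : seq V) w t : pw (s ++ w :: t) = pw (rcons s w) + pw (w :: t).
Proof. by rewrite /pweight pedges_cat_mid big_cat. Qed.

Lemma pw_join (s : seq V) a v t :
  pw (s ++ a :: v :: t) = pw (rcons s a) + wt a v + pw (v :: t).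
Proof. by rewrite /pweight pedges_join big_cat big_cons /= addrA. Qed.

Lemma is_spathE x y (s : seq V) :
  is_spath E x y s = [&& s != [::], head x s == x, sorted E s, last x s == y & uniq s].
Proof. by case: s. Qed.

Lemma all_seqs_size n (s : seq V) : s \in all_seqs V n -> size s = n.
Proof.
elim: n s => [|n IH] s /=; first by rewrite inE => /eqP ->.
by case/allpairsP => [[x t] [_ Ht ->]] /=; rewrite (IH _ Ht).
Qed.

Lemma mem_all_seqs (s : seq V) : s \in all_seqs V (size s).
Proof.
elim: s => [|x s IH] /=; first by rewrite inE.
by apply/allpairsP; exists (x, s); rewrite mem_enum.
Qed.

Lemma uniq_all_seqs n : uniq (all_seqs V n).
Proof.
elim: n => [//|n IH] /=. apply: allpairs_uniq => //; first exact: enum_uniq.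
by move=> [x s] [y t] _ _ [-> ->].
Qed.

Lemma uniq_flat m k : uniq (flatten [seq all_seqs V n | n <- iota m k]).
Proof.
elim: k m => [//|k IH] m /=. rewrite cat_uniq uniq_all_seqs IH andbT /=.
apply/hasPn => s /flattenP [t /mapP [n Hn ->]] Hs; apply/negP => Hm.
move: Hn; rewrite mem_iota -(all_seqs_size Hs) -(all_seqs_size Hm).
by rewrite ltnn.
Qed.

Lemma size_uniq (s : seq V) : uniq s -> (size s <= #|V|)%N.
Proof. move=> Hu; rewrite cardE; apply: uniq_leq_size => // u; by rewrite mem_enum. Qed.

Lemma mem_spaths x y s : (s \in spaths E x y) = is_spath E x y s.
Proof.
rewrite mem_filter; case H: (is_spath E x y s) => //; rewrite andTb.
apply/flattenP; exists (all_seqs V (size s)); last exact: mem_all_seqs.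
apply/mapP; exists (size s) => //.
have Hu : uniq s by move: H; rewrite is_spathE => /and5P[].
by rewrite mem_iota add0n ltnS; apply: size_uniq.
Qed.

Lemma uniq_shortest x y : uniq (shortest E wt x y).
Proof. exact/filter_uniq/filter_uniq/uniq_flat. Qed.

Lemma mem_shortest x y p : (p \in shortest E wt x y) =
  is_spath E x y p && all (fun q => pw p <= pw q) (spaths E x y).
Proof. by rewrite mem_filter mem_spaths andbC. Qed.

Lemma exists_min (l : seq (seq V)) : l != [::] ->
  exists2 p, p \in l & all (fun q => pw p <= pw q) l.
Proof.
elim: l => [//|q l IH] _. case: l IH => [|q' l] IH.
  by exists q; rewrite ?inE ?eqxx //= lexx.
have [p Hp Ha] := IH isT. case: (leP (pw q) (pw p)) => H.
  exists q; first by rewrite inE eqxx.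
  apply/allP => r; rewrite inE => /orP [/eqP -> | Hr]; first exact: lexx.
  exact: le_trans H (allP Ha r Hr).
exists p; first by rewrite inE Hp orbT.
apply/allP => r; rewrite inE => /orP [/eqP -> | Hr]; first exact: ltW.
exact: (allP Ha r Hr).
Qed.

Lemma dist_None x y : dist E wt x y = None -> forall p, ~~ is_spath E x y p.
Proof.
rewrite /dist. case Hs: (shortest E wt x y) => [|p0 l] // _ p.
apply/negP => Hp. have: spaths E x y != [::].
  by apply/eqP => H; move: Hp; rewrite -mem_spaths H.
case/exists_min => q Hq Ha. have: q \in shortest E wt x y by rewrite mem_filter Ha Hq.
by rewrite Hs.
Qed.

Lemma dist_Some x y d : dist E wt x y = Some d ->
  (exists2 p, is_spath E x y p & pw p = d) /\ (forall q, is_spath E x y q -> d <= pw q).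
Proof.
rewrite /dist. case Hs: (shortest E wt x y) => [|p l] //= [<-].
have: p \in shortest E wt x y by rewrite Hs inE eqxx.
rewrite mem_shortest => /andP [Hp Ha]. split; first by exists p.
by move=> q Hq; apply: (allP Ha); rewrite mem_spaths.
Qed.

Lemma shortest_dist x y p : p \in shortest E wt x y -> dist E wt x y = Some (pw p).
Proof.
move=> Hp. have := Hp; rewrite /dist. case Hs: (shortest E wt x y) => [|p0 l] //= _.
have: p0 \in shortest E wt x y by rewrite Hs inE eqxx.
rewrite !mem_shortest in Hp * => /andP [H0 A0]; case/andP: Hp => [H1 A1].
congr Some; apply/eqP; rewrite eq_le (allP A0) ?mem_spaths //= (allP A1) //.
by rewrite mem_spaths.
Qed.


Lemma mem_pedges a v (P : seq V) : (a, v) \in pedges P -> exists s t, P = s ++ a :: v :: t.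
Proof.
elim: P => [//|u P IH]. case: P IH => [//|w P] IH.
rewrite /pedges /= in IH *; rewrite inE => /orP [/eqP [-> ->] | H].
  by exists [::], P.
have [s [t Hst]] := IH H. by exists (u :: s), t; rewrite Hst.
Qed.

Lemma split_first (y : V) t : y \in t -> exists c r, t = c ++ y :: r /\ y \notin c.
Proof.
elim: t => [//|u t IH]. rewrite inE; case: (eqVneq y u) => [-> _ | Hne /= Ht].
  by exists [::], t.
have [c [r [-> Hc]]] := IH Ht. exists (u :: c), r; split => //.
by rewrite inE negb_or Hne.
Qed.

Lemma dup_split (s : seq V) : ~~ uniq s ->
  exists s1 w c r, s = s1 ++ w :: c ++ w :: r /\ uniq (rcons c w).
Proof.
elim: s => [//|y t IH] /=. rewrite negb_and negbK. case Hu: (uniq t).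
  rewrite orbF => Hy. have [c [r [Ht Hc]]] := split_first Hy.
  exists [::], y, c, r; split; first by rewrite Ht.
  rewrite rcons_uniq Hc /=. by move: Hu; rewrite Ht cat_uniq => /andP [].
rewrite orbT => _. have [s1 [w [c [r [-> Hc]]]]] := IH (negbT Hu).
by exists (y :: s1), w, c, r.
Qed.

Lemma head_cat_cons (x0 w : V) s1 t : head x0 (s1 ++ w :: t) = head w s1.
Proof. by case: s1. Qed.

Hypothesis nnc : no_nonpos_cycle E wt.

Lemma reduce n x0 (s : seq V) : (size s <= n)%N -> s != [::] -> sorted E s ->
  exists s', [/\ s' != [::], sorted E s', uniq s',
     head x0 s' = head x0 s /\ last x0 s' = last x0 s &
     pw s' <= pw s /\ (~~ uniq s -> pw s' < pw s)].
Proof.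
elim: n s => [|n IH] s Hn Hne Hs.
  by case: s Hn Hne Hs.
case Hu: (uniq s).
  by exists s; split => //; split.
have [s1 [w [c [r [Es Hc]]]]] := dup_split (negbT Hu).
set s2 := s1 ++ w :: r.
have Hsz : (size s2 <= n)%N.
  by move: Hn; rewrite Es /s2 !size_cat /= size_cat /=; lia.
have Hs2 : sorted E s2.
  move: Hs; rewrite Es sorted_cat_cons /s2 sorted_cat_cons => /andP [-> /=].
  by rewrite cat_path => /andP [_] /= /andP [_ ->].
have Hne2 : s2 != [::] by rewrite /s2 -size_eq0 size_cat /= addnS.
have [s3 [H3ne H3s H3u [H3h H3l] [H3w _]]] := IH s2 Hsz Hne2 Hs2.
have Hlt : pw s2 < pw s.
  rewrite Es /s2 !pw_mid -cat_cons pw_mid ltrD2l ltrDr.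
  have -> : rcons (w :: c) w = w :: rcons c w by [].
  apply: (nnc (x:=w) (p:=rcons c w)) => //.
  - move: Hs; rewrite Es sorted_cat_cons => /andP [_].
    by rewrite -cat_rcons cat_path => /andP [].
  - by rewrite last_rcons.
  - by case: c {Hc Es}.
exists s3; split => //; split.
- by rewrite H3h /s2 Es !head_cat_cons.
- by rewrite H3l /s2 Es !last_cat /= last_cat.
- exact: le_trans H3w (ltW Hlt).
- by move=> _; apply: le_lt_trans H3w Hlt.
Qed.


Lemma spath_rcons x a (Q : seq V) : is_spath E x a Q -> exists s, Q = rcons s a.
Proof.
case/lastP: Q => [//|s u]; rewrite is_spathE last_rcons => /and5P [_ _ _ /eqP -> _].
by exists s.
Qed.

Lemma spath_cons v y (Q : seq V) : is_spath E v y Q -> exists t, Q = v :: t.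
Proof. by case: Q => [//|u t] /= /and4P [/eqP -> _ _ _]; exists t. Qed.

Lemma shortest_spath x y p : p \in shortest E wt x y -> is_spath E x y p.
Proof. by rewrite mem_shortest => /andP []. Qed.

Lemma head_rcons' (x0 : V) s a : head x0 (rcons s a) = head a s.
Proof. by case: s. Qed.

Lemma concat_shortest x y a v s t : E a v ->
  dist E wt x y = oadd (oadd (dist E wt x a) (Some (wt a v))) (dist E wt v y) ->
  rcons s a \in shortest E wt x a -> v :: t \in shortest E wt v y ->
  s ++ a :: v :: t \in shortest E wt x y.
Proof.
move=> Eav Hd HQ HR.
rewrite (shortest_dist HQ) (shortest_dist HR) /= in Hd.
have [_ Hmin] := dist_Some Hd.
move: (shortest_spath HQ) (shortest_spath HR); rewrite !is_spathE.
case/and5P => _ Hh1 Hs1 _ _ /and5P [_ _ Hs2 Hl2 _].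
set P := s ++ a :: v :: t.
have HsP : sorted E P by rewrite /P sorted_cat_cons Hs1 /= Eav.
have HneP : P != [::] by rewrite /P -size_eq0 size_cat /= addnS.
have HwP : pw P = pw (rcons s a) + wt a v + pw (v :: t) by rewrite /P pw_join.
have [s' [H1 H2 H3 [H4 H5] [H6 H7]]] := @reduce (size P) x P (leqnn _) HneP HsP.
have HhP : head x P = x by rewrite /P head_cat_cons -(eqP Hh1) head_rcons'.
have HlP : last x P = y by rewrite /P last_cat; exact: (eqP Hl2).
have HuP : uniq P.
  apply/negPn/negP => Hu.
  have Hs' : is_spath E x y s' by rewrite is_spathE H1 H2 H3 H4 H5 HhP HlP !eqxx.
  have := Hmin _ Hs'; rewrite -HwP => Hle.
  by have := lt_le_trans (H7 Hu) Hle; rewrite ltxx.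
have HP : is_spath E x y P by rewrite is_spathE HneP HsP HuP HhP HlP !eqxx.
rewrite mem_shortest HP /=; apply/allP => q; rewrite mem_spaths => Hq.
by rewrite HwP; apply: Hmin.
Qed.

Lemma split_shortest x y a v P :
  dist E wt x y = oadd (oadd (dist E wt x a) (Some (wt a v))) (dist E wt v y) ->
  P \in shortest E wt x y -> (a, v) \in pedges P ->
  exists s t, [/\ P = s ++ a :: v :: t, rcons s a \in shortest E wt x a &
                  v :: t \in shortest E wt v y].
Proof.
move=> Hd HP Hav. have [s [t Est]] := mem_pedges Hav. exists s, t.
have := shortest_spath HP; rewrite is_spathE Est => /and5P [_ Hh Hs Hl Hu].
have HQ : is_spath E x a (rcons s a).
  rewrite is_spathE -size_eq0 size_rcons /= head_rcons' last_rcons eqxx.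
  rewrite head_cat_cons in Hh; rewrite Hh.
  move: Hs; rewrite sorted_cat_cons => /andP [-> _].
  by move: Hu; rewrite -cat_rcons cat_uniq => /andP [->].
have HR : is_spath E v y (v :: t).
  have Hvt : uniq (v :: t) by move: Hu; rewrite -cat_rcons cat_uniq => /and3P [_ _ ->].
  have Hpt : path E v t by move: Hs; rewrite sorted_cat_cons => /andP [_ /= /andP [_ ->]].
  have Hlt : last v t == y by rewrite last_cat in Hl.
  by apply/and4P; split.
case Da: (dist E wt x a) => [da|]; last by have := dist_None Da (rcons s a); rewrite HQ.
case Db: (dist E wt v y) => [db|]; last by have := dist_None Db (v :: t); rewrite HR.
rewrite Da Db /= in Hd. have := shortest_dist HP; rewrite Hd Est pw_join => -[HwP].
have [_ Hma] := dist_Some Da; have [_ Hmb] := dist_Some Db.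
have L1 := Hma _ HQ; have L2 := Hmb _ HR.
have E1 : pw (rcons s a) = da by lra.
have E2 : pw (v :: t) = db by lra.
split => //; rewrite mem_shortest ?HQ ?HR /=; apply/allP => q;
  rewrite mem_spaths => Hq; rewrite ?E1 ?E2; [exact: Hma | exact: Hmb].
Qed.

Lemma prefix_join (s : seq V) a v t : uniq (s ++ a :: v :: t) ->
  prefix_to a (s ++ a :: v :: t) = rcons s a.
Proof.
rewrite cat_uniq => /and3P [_ Hn _].
have Ha : a \notin s by apply: contra Hn => H; apply/hasP; exists a; rewrite ?inE ?eqxx.
rewrite /prefix_to index_cat (negbTE Ha) /= eqxx addn0 -cat_rcons.
by rewrite -(size_rcons s a) take_size_cat.
Qed.

Lemma suffix_join (s : seq V) a v t : uniq (s ++ a :: v :: t) ->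
  suffix_from v (s ++ a :: v :: t) = v :: t.
Proof.
rewrite -cat_rcons cat_uniq => /and3P [_ Hn _].
have Hv : v \notin rcons s a by apply: contra Hn => H; apply/hasP; exists v; rewrite ?inE ?eqxx.
by rewrite /suffix_from index_cat (negbTE Hv) /= eqxx addn0 drop_size_cat.
Qed.

Lemma shortest_uniq x y p : p \in shortest E wt x y -> uniq p.
Proof. by move/shortest_spath; rewrite is_spathE => /and5P []. Qed.

Lemma split_sum (R : comRingType) (g : seq V -> R) x y a v : E a v ->
  dist E wt x y = oadd (oadd (dist E wt x a) (Some (wt a v))) (dist E wt v y) ->
  \sum_(P <- shortest E wt x y | (a, v) \in pedges P) g P =
  \sum_(Q <- shortest E wt x a) \sum_(Rr <- shortest E wt v y) g (Q ++ Rr).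
Proof.
move=> Eav Hd. rewrite -big_filter.
set L := [seq (Q, Rr) | Q <- shortest E wt x a, Rr <- shortest E wt v y].
have -> : \sum_(Q <- shortest E wt x a) \sum_(Rr <- shortest E wt v y) g (Q ++ Rr)
    = \sum_(p <- L) g (p.1 ++ p.2) by rewrite big_allpairs.
rewrite -(big_map (fun p => p.1 ++ p.2) xpredT g).
apply: perm_big; apply: uniq_perm.
- exact/filter_uniq/uniq_shortest.
- rewrite map_inj_in_uniq.
    by apply: allpairs_uniq; rewrite ?uniq_shortest // => [[? ?] [? ?]] _ _ [-> ->].
  move=> p1 p2 /allpairsP [[Q Rr] [/= HQ HR ->]] /allpairsP [[Q' R'] [/= HQ' HR' ->]] /=.
  have [s Es] := spath_rcons (shortest_spath HQ).
  have [t Et] := spath_cons (shortest_spath HR).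
  have [s' Es'] := spath_rcons (shortest_spath HQ').
  have [t' Et'] := spath_cons (shortest_spath HR').
  rewrite Es Et Es' Et' in HQ HR HQ' HR' *; rewrite !cat_rcons => Heq.
  have Hu := shortest_uniq (concat_shortest Eav Hd HQ HR).
  have Hu' := shortest_uniq (concat_shortest Eav Hd HQ' HR').
  have := prefix_join Hu; rewrite Heq prefix_join // => ->.
  have := suffix_join Hu; rewrite Heq suffix_join // => ->.
  by [].
- move=> P; rewrite mem_filter; apply/andP/mapP.
    case=> Hav HP. have [s [t [-> HQ HR]]] := split_shortest Hd HP Hav.
    exists (rcons s a, v :: t); last by rewrite /= cat_rcons.
    by apply/allpairsP; exists (rcons s a, v :: t).
  case=> [[Q Rr]] /allpairsP [[Q' R'] [/= HQ HR [-> ->]]] -> /=.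
  have [s Es] := spath_rcons (shortest_spath HQ).
  have [t Et] := spath_cons (shortest_spath HR).
  rewrite Es Et in HQ HR *; rewrite cat_rcons; split.
    by rewrite pedges_join mem_cat inE eqxx orbT.
  exact: concat_shortest.
Qed.

Lemma ring4 (R : comRingType) (A Z B C : R) : A * Z * B * C = B * C * A * Z.
Proof. ring. Qed.
Lemma ring3 (R : comRingType) (A Z B C : R) : B * C * A * Z = C * (A * (Z * B)).
Proof. ring. Qed.
Lemma ring5 (R : comRingType) (q q4 q1 q3 x : R) :
  q4 * (q1 * (x ^+ 2 * (q * q3))) = q * x * q4 * (q1 * x * q3).
Proof. ring. Qed.

Lemma fpath_join (R : comRingType) (z : V -> V -> R) (s : seq V) (a v : V) (t : seq V) :
  Defs.fpath z (s ++ a :: v :: t) = Defs.fpath z (rcons s a) * z a v * Defs.fpath z (v :: t).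
Proof. by rewrite /Defs.fpath pedges_join big_cat big_cons /= mulrA. Qed.

Lemma main_gen (R : comRingType) (z : V -> V -> R) x1 y1 x2 y2 a v :
  E a v ->
  dist E wt x1 y1 = oadd (oadd (dist E wt x1 a) (Some (wt a v))) (dist E wt v y1) ->
  dist E wt x2 y2 = oadd (oadd (dist E wt x2 a) (Some (wt a v))) (dist E wt v y2) ->
  Hav E wt z a v x1 y1 x2 y2 =
    F E wt z x2 a * (z a v) ^+ 2 * Fdisj E wt z x1 a v y2 * F E wt z v y1.
Proof.
move=> Eav H1 H2.
set d := int_disj x1 a v y2.
transitivity (\sum_(Q <- shortest E wt x1 a) \sum_(Q4 <- shortest E wt v y1)
   \sum_(Q1 <- shortest E wt x2 a) \sum_(Q3 <- shortest E wt v y2)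
   (if d Q Q3 then Defs.fpath z Q * z a v * Defs.fpath z Q4 * (Defs.fpath z Q1 * z a v * Defs.fpath z Q3)
    else 0)).
  rewrite /Hav.
  transitivity (\sum_(P1 <- shortest E wt x1 y1 | (a, v) \in pedges P1)
     \sum_(P2 <- shortest E wt x2 y2 | (a, v) \in pedges P2)
     (if d (prefix_to a P1) (suffix_from v P2) then Defs.fpath z P1 * Defs.fpath z P2 else 0)).
    rewrite [RHS]big_mkcond /=; apply: eq_bigr => P1 _.
    case: ifP => Hc1; last by rewrite big1 // => P2.
    rewrite big_mkcond [RHS]big_mkcond /=; apply: eq_bigr => P2 _.
    by case: ((a, v) \in pedges P2) => //=; case: ifP.
  rewrite (split_sum _ Eav H1); apply: eq_big_seq => Q HQ; apply: eq_big_seq => Q4 HQ4.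
  rewrite (split_sum _ Eav H2); apply: eq_big_seq => Q1 HQ1; apply: eq_big_seq => Q3 HQ3.
  have [s Es] := spath_rcons (shortest_spath HQ).
  have [t Et] := spath_cons (shortest_spath HQ4).
  have [s' Es'] := spath_rcons (shortest_spath HQ1).
  have [t' Et'] := spath_cons (shortest_spath HQ3).
  rewrite Es Et Es' Et' in HQ HQ4 HQ1 HQ3 *; rewrite !cat_rcons.
  have Hu := shortest_uniq (concat_shortest Eav H1 HQ HQ4).
  have Hu' := shortest_uniq (concat_shortest Eav H2 HQ1 HQ3).
  by rewrite prefix_join // suffix_join // !fpath_join.
symmetry.
transitivity (\sum_(Q <- shortest E wt x1 a)
   (\sum_(Q3 <- shortest E wt v y2 | d Q Q3) Defs.fpath z Q * Defs.fpath z Q3)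
     * F E wt z v y1 * F E wt z x2 a * z a v ^+ 2).
  by rewrite /Fdisj /d -!big_distrl /= ring4.
apply: eq_bigr => Q _.
set S := \sum_(Q3 <- shortest E wt v y2 | d Q Q3) Defs.fpath z Q * Defs.fpath z Q3.
transitivity (F E wt z v y1 * (F E wt z x2 a * (z a v ^+ 2 * S))); first exact: ring3.
rewrite /F big_distrl /=; apply: eq_bigr => Q4 _.
rewrite big_distrl big_distrr /=; apply: eq_bigr => Q1 _.
rewrite /S big_mkcond !big_distrr /=; apply: eq_bigr => Q3 _.
by case: ifP => _; [rewrite ring5 | rewrite !mulr0].
Qed.

End Proof.

Theorem lemma7 (V : finType) (E : rel V) (W : realDomainType) (wt : V -> V -> W)
    (K : fieldType) (charK : 2%N \in [pchar K]) (x1 y1 x2 y2 a v : V) :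
  no_nonpos_cycle E wt ->
  E a v ->
  dist E wt x1 y1 = oadd (oadd (dist E wt x1 a) (Some (wt a v))) (dist E wt v y1) ->
  dist E wt x2 y2 = oadd (oadd (dist E wt x2 a) (Some (wt a v))) (dist E wt v y2) ->
  Hav E wt (@zvar K V) a v x1 y1 x2 y2 =
    F E wt (@zvar K V) x2 a * (zvar K a v) ^+ 2 * Fdisj E wt (@zvar K V) x1 a v y2
    * F E wt (@zvar K V) v y1.
Proof.
move=> nnc Eav H1 H2. exact: main_gen.
Qed.
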